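(* Let $\mathcal C\subseteq\mathbb F_2^n$ be a binary linear code, $\prec$ an admissible order on $[X]$, and $(N,G)$ the output of Algorithm R for $\mathcal C$ and $<_e$. Let $\to$ be one-step reduction modulo $G$ and $\overset{*}{\to}$ its reflexive-transitive closure. Then: (i) there is no infinite sequence $w_0\to w_1\to w_2\to\cdots$ (the reduction is noetherian); (ii) for any $w\in[X]$, if $w\overset{*}{\to}w_1$ and $w\overset{*}{\to}w_2$ with $w_1,w_2$ irreducible, then $w_1=w_2$; (iii) every irreducible word belongs to $N$; (iv) if $w\overset{*}{\to}w'$ then $\xi(w)=\xi(w')$.
   Context: Binary setting: $[X]$ is the free commutative monoid on $X=\{x_1,\dots,x_n\}$; $\psi:[X]\to\mathbb F_2^n$ sends $\prod x_i^{\beta_i}$ to $(\beta_i\bmod 2)_i$; $\mathcal C$ has dimension $k$ and parity check matrix $H$ ($n\times(n-k)$, $\mathcal C=\{c:cH=0\}$); syndrome $\xi(w)=\psi(w)H$. A word is standard if all exponents are $<2$; the standard form of $w$ is obtained by reducing all exponents mod 2. $\mathrm{Ind}(w)=\{i:x_i\mid w\}$. Error-vector order: $u<_e w$ iff $|\mathrm{Ind}(u)|<|\mathrm{Ind}(w)|$, or equality and $u\prec w$. Algorithm R: keep a list $L$ of words sorted increasingly by $<_e$, a set $N$ and a set $G$ of binomials; initially $L=(1)$, $N=G=\emptyset$. While $L\ne\emptyset$: remove the $<_e$-smallest $w$ from $L$; if $w$ is divisible by the leading word of some binomial of $G$, discard it; otherwise, if some $w'\in N$ has $\xi(w')=\xi(w)$,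 add the binomial $w-w'$ to $G$ with leading word $T(w-w')=w$; else add $w$ to $N$ and insert all $wx$ ($x\in X$) into $L$. Output $(N,G)$. One-step reduction modulo $G$: if $w$ is not standard, $w\to$ (standard form of $w$); if $w$ is standard and $w=us$ where $u-u'\in G$ has leading word $u$, then $w\to u's$. A word is irreducible if no one-step reduction applies to it. *)

(* Defs.v *)
From HB Require Import structures.
From mathcomp Require Import all_boot all_order all_algebra.
Set Implicit Arguments. Unset Strict Implicit. Unset Printing Implicit Defensive.
Import GRing.Theory.
Local Open Scope ring_scope.

(* Words of the free commutative monoid [X], X = {x_1,...,x_n}, represented
   by their exponent vectors; the product is pointwise addition. *)
Definition word (n : nat) := {ffun 'I_n -> nat}.

Definition onew {n} : word n := [ffun _ => 0%N].
Definition mulw {n} (u v : word n) : word n := [ffun i => (u i + v i)%N].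
Definition varw {n} (i : 'I_n) : word n := [ffun j => nat_of_bool (j == i)].

Definition psi {n} (w : word n) : 'rV['F_2]_n := \row_i ((w i %% 2)%N%:R).
Definition syn {n m} (H : 'M['F_2]_(n, m)) (w : word n) : 'rV['F_2]_m :=
  psi w *m H.

Definition standard {n} (w : word n) : bool := [forall i, (w i < 2)%N].
Definition stdform {n} (w : word n) : word n := [ffun i => (w i %% 2)%N].
Definition Ind {n} (w : word n) : {set 'I_n} := [set i | (0 < w i)%N].
Definition dividesw {n} (u w : word n) : Prop := exists s, w = mulw u s.

Definition admissible {n} (prec : rel (word n)) : Prop :=
  [/\ (forall u, ~~ prec u u),
      (forall u v w, prec u v -> prec v w -> prec u w),
      (forall u v, u != v -> prec u v || prec v u),
      (forall u, u != onew -> prec onew u)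
    & (forall u v s, prec u v -> prec (mulw u s) (mulw v s))].

Definition lt_e {n} (prec : rel (word n)) (u w : word n) : bool :=
  (#|Ind u| < #|Ind w|)%N || ((#|Ind u| == #|Ind w|) && prec u w).

(* Algorithm R.  State = (L, N, G); a binomial w - w' with leading word w is
   stored as the pair (w, w').  L is treated as a set: removing w removes
   every copy of w. *)
Definition stateR n := (seq (word n) * seq (word n) * seq (word n * word n))%type.

Inductive Rstep {n m} (prec : rel (word n)) (H : 'M['F_2]_(n, m)) :
  stateR n -> stateR n -> Prop :=
| Rdiscard L N G w :
    w \in L -> (forall u, u \in L -> u = w \/ lt_e prec w u) ->
    (exists2 g, g \in G & dividesw g.1 w) ->
    Rstep prec H (L, N, G) ([seq u <- L | u != w], N, G)
| Rbinom L N G w w' :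
    w \in L -> (forall u, u \in L -> u = w \/ lt_e prec w u) ->
    ~ (exists2 g, g \in G & dividesw g.1 w) ->
    w' \in N -> syn H w' = syn H w ->
    Rstep prec H (L, N, G) ([seq u <- L | u != w], N, rcons G (w, w'))
| Rnew L N G w :
    w \in L -> (forall u, u \in L -> u = w \/ lt_e prec w u) ->
    ~ (exists2 g, g \in G & dividesw g.1 w) ->
    (forall w', w' \in N -> syn H w' != syn H w) ->
    Rstep prec H (L, N, G)
      ([seq u <- L | u != w] ++ [seq mulw w (varw i) | i <- enum 'I_n],
       rcons N w, G).

Inductive star {T} (r : T -> T -> Prop) : T -> T -> Prop :=
| star_refl x : star r x x
| star_step x y z : r x y -> star r y z -> star r x z.

Definition outputR {n m} (prec : rel (word n)) (H : 'M['F_2]_(n, m))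
  (N : seq (word n)) (G : seq (word n * word n)) : Prop :=
  star (Rstep prec H) ([:: onew], [::], [::]) ([::], N, G).

Inductive redG {n} (G : seq (word n * word n)) : word n -> word n -> Prop :=
| red_std w : ~~ standard w -> redG G w (stdform w)
| red_bin w u u' s :
    standard w -> (u, u') \in G -> w = mulw u s -> redG G w (mulw u' s).

Definition irreducible {n} (G : seq (word n * word n)) (w : word n) : Prop :=
  forall w', ~ redG G w w'.

(* Main.v *)
Require Import Defs.
From HB Require Import structures.
From mathcomp Require Import all_boot all_order all_algebra.
From mathcomp Require Import zify.
Set Implicit Arguments. Unset Strict Implicit. Unset Printing Implicit Defensive.

Lemma mulwC n (u v : word n) : mulw u v = mulw v u.
Proof. by apply/ffunP=> i; rewrite !ffunE addnC. Qed.
Lemma mul1w n (u : word n) : mulw onew u = u.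
Proof. by apply/ffunP=> i; rewrite !ffunE. Qed.
Lemma mulw1 n (u : word n) : mulw u onew = u.
Proof. by rewrite mulwC mul1w. Qed.
Lemma mulwA n (u v w : word n) : mulw (mulw u v) w = mulw u (mulw v w).
Proof. by apply/ffunP=> i; rewrite !ffunE addnA. Qed.
Lemma Ind_mul n (u v : word n) : Ind (mulw u v) = Ind u :|: Ind v.
Proof. by apply/setP=> i; rewrite !inE ffunE addn_gt0. Qed.

Lemma lt_e_irr n prec (u : word n) : admissible prec -> ~~ lt_e prec u u.
Proof. by case=> irr _ _ _ _; rewrite /lt_e ltnn eqxx /= irr. Qed.

Lemma lt_e_trans n prec (u v w : word n) : admissible prec ->
  lt_e prec u v -> lt_e prec v w -> lt_e prec u w.
Proof.
case=> _ tr _ _ _; rewrite /lt_e.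
case/orP=> [h1|/andP[/eqP e1 p1]]; case/orP=> [h2|/andP[/eqP e2 p2]].
- by rewrite (ltn_trans h1 h2).
- by rewrite -e2 h1.
- by rewrite e1 h2.
- by rewrite e1 e2 eqxx (tr _ _ _ p1 p2) orbT.
Qed.

Lemma lt_e_mul n prec (w s : word n) : admissible prec -> s != onew ->
  lt_e prec w (mulw w s).
Proof.
case=> _ _ _ one mul hs.
have sub : Ind w \subset Ind (mulw w s) by rewrite Ind_mul subsetUl.
rewrite /lt_e ltn_neqAle subset_leq_card // andbT.
case: eqP => //= _.
by have := mul _ _ w (one _ hs); rewrite mul1w mulwC.
Qed.

Lemma varw_neq n (i : 'I_n) : varw i != onew.
Proof. by apply/eqP=> /ffunP/(_ i); rewrite !ffunE eqxx. Qed.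

Lemma lt_e_std n prec (w : word n) : admissible prec -> ~~ standard w ->
  lt_e prec (stdform w) w.
Proof.
move=> adm hs.
pose t : word n := [ffun i => w i - w i %% 2].
have E : mulw (stdform w) t = w.
  by apply/ffunP=> i; rewrite !ffunE subnKC // leq_mod.
rewrite -{2}E; apply: lt_e_mul adm _.
apply/eqP=> /ffunP ht; move: hs; rewrite /standard negb_forall => /existsP[i].
rewrite -leqNgt => hi; have := ht i; rewrite !ffunE => /eqP; rewrite subn_eq0.
have := ltn_pmod (w i) (isT : 0 < 2). lia.
Qed.

Lemma lt_e_bin n prec (u u' s : word n) : admissible prec ->
  standard (mulw u s) -> lt_e prec u' u -> lt_e prec (mulw u' s) (mulw u s).
Proof.
case=> irr tr tot one mul hst hlt.
have disj : Ind u :&: Ind s = set0.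
  apply/setP=> i; rewrite !inE; apply/negbTE/negP=> /andP[a b].
  move/forallP: hst => /(_ i); rewrite ffunE. lia.
have c1 : #|Ind (mulw u s)| = #|Ind u| + #|Ind s|.
  by rewrite Ind_mul -cardsUI disj cards0 addn0.
have c2 : #|Ind (mulw u' s)| <= #|Ind u'| + #|Ind s|.
  by rewrite Ind_mul -cardsUI leq_addr.
move: hlt; rewrite /lt_e c1.
case/orP=> [h|/andP[/eqP e p]].
  by rewrite (leq_ltn_trans c2) // ltn_add2r.
rewrite -e ltn_neqAle c2 andbT.
case: eqP => //= _; exact: mul.
Qed.

Lemma psi_mul n (u s : word n) : psi (mulw u s) = (psi u + psi s)%R.
Proof.
apply/rowP=> i; rewrite !mxE ffunE.
by rewrite !Fp_nat_mod // GRing.natrD.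
Qed.

Lemma syn_mul n m (H : 'M['F_2]_(n, m)) (u s : word n) :
  syn H (mulw u s) = (syn H u + syn H s)%R.
Proof. by rewrite /syn psi_mul mulmxDl. Qed.

Lemma syn_std n m (H : 'M['F_2]_(n, m)) (w : word n) : syn H (stdform w) = syn H w.
Proof. by rewrite /syn; congr (mulmx _ _); apply/rowP=> i; rewrite !mxE ffunE modn_mod. Qed.

Definition inv n m prec (H : 'M['F_2]_(n,m)) (st : stateR n) : Prop :=
  [/\ forall g, g \in st.2 -> syn H g.1 = syn H g.2,
      forall a b, a \in st.1.2 -> b \in st.1.2 -> syn H a = syn H b -> a = b,
      forall g, g \in st.2 -> lt_e prec g.2 g.1
    & forall a x, a \in st.1.2 -> x \in st.1.1 -> lt_e prec a x].

Lemma inv_step n m prec (H : 'M['F_2]_(n,m)) s t : admissible prec ->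
  Rstep prec H s t -> inv prec H s -> inv prec H t.
Proof.
move=> adm; case.
- move=> L N G w wL wmin _ [I1 I2 I3 I4]; split=> //= a x aN.
  by rewrite mem_filter => /andP[_ xL]; exact: I4.
- move=> L N G w w' wL wmin _ w'N esyn [I1 I2 I3 I4]; split=> //=.
  + by move=> g; rewrite mem_rcons inE => /orP[/eqP->|/I1] //=.
  + move=> g; rewrite mem_rcons inE => /orP[/eqP->|/I3] //=; exact: I4.
  + by move=> a x aN; rewrite mem_filter => /andP[_ xL]; exact: I4.
- move=> L N G w wL wmin _ hN [I1 I2 I3 I4]; split=> //=.
  + move=> a b; rewrite !mem_rcons !inE => /orP[/eqP->|aN] /orP[/eqP->|bN] //.
    * by move=> e; have := hN _ bN; rewrite -e eqxx.
    * by move=> e; have := hN _ aN; rewrite e eqxx.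
    * exact: I2.
  + move=> a x; rewrite mem_rcons inE mem_cat mem_filter.
    case/orP=> [/eqP->|aN] /orP[/andP[xw xL]| /mapP[i _ ->]].
    * by case: (wmin _ xL) => // e; rewrite e eqxx in xw.
    * exact: lt_e_mul adm (varw_neq i).
    * exact: I4.
    * exact: lt_e_trans adm (I4 _ _ aN wL) (lt_e_mul w adm (varw_neq i)).
Qed.

Lemma inv_star n m prec (H : 'M['F_2]_(n,m)) s t : admissible prec ->
  star (Rstep prec H) s t -> inv prec H s -> inv prec H t.
Proof.
move=> adm; elim=> // a b c st _ IH h; apply: IH; exact: inv_step adm st h.
Qed.

Lemma step_mono n m prec (H : 'M['F_2]_(n,m)) s t :
  Rstep prec H s t -> {subset s.1.2 <= t.1.2} /\ {subset s.2 <= t.2}.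
Proof.
case=> /= *; split=> // x hx; by rewrite mem_rcons inE hx orbT.
Qed.

Lemma star_mono n m prec (H : 'M['F_2]_(n,m)) s t :
  star (Rstep prec H) s t -> {subset s.1.2 <= t.1.2} /\ {subset s.2 <= t.2}.
Proof.
elim=> [a|a b c st _ [h1 h2]]; first by split.
have [g1 g2] := step_mono st.
by split=> x hx; [apply: h1; apply: g1 | apply: h2; apply: g2].
Qed.

Lemma stepA n m prec (H : 'M['F_2]_(n,m)) s y x :
  Rstep prec H s y -> x \in s.1.1 -> x \notin y.1.1 ->
  (exists2 g, g \in y.2 & dividesw g.1 x) \/ x \in y.1.2.
Proof.
case.
- move=> L N G w wL _ hd /= xL; rewrite mem_filter xL andbT negbK => /eqP->.
  by left.
- move=> L N G w w' wL _ _ _ _ /= xL; rewrite mem_filter xL andbT negbK => /eqP->.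
  left; exists (w, w'); first by rewrite mem_rcons mem_head.
  by exists onew; rewrite mulw1.
- move=> L N G w wL _ _ _ /= xL.
  rewrite mem_cat mem_filter xL andbT negb_or negbK => /andP[/eqP-> _].
  by right; rewrite mem_rcons mem_head.
Qed.

Lemma lemA n m prec (H : 'M['F_2]_(n,m)) s t x :
  star (Rstep prec H) s t -> t.1.1 = [::] -> x \in s.1.1 ->
  (exists2 g, g \in t.2 & dividesw g.1 x) \/ x \in t.1.2.
Proof.
elim=> [st|a y c st yt IH] Lt xs; first by rewrite Lt in xs.
case: (boolP (x \in y.1.1)) => xy; first exact: IH.
have [mN mG] := star_mono yt.
case: (stepA st xs xy) => [[g gG gd]|xN].
  by left; exists g => //; exact: mG.
by right; exact: mN.
Qed.

Lemma stepB n m prec (H : 'M['F_2]_(n,m)) s y v :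
  Rstep prec H s y -> v \in y.1.2 ->
  v \in s.1.2 \/ forall i, mulw v (varw i) \in y.1.1.
Proof.
case.
- by move=> L N G w _ _ _ /= ->; left.
- by move=> L N G w w' _ _ _ _ _ /= ->; left.
- move=> L N G w _ _ _ _ /=; rewrite mem_rcons inE => /orP[/eqP->|->]; last by left.
  right=> i; rewrite mem_cat; apply/orP; right; apply: map_f; by rewrite mem_enum.
Qed.

Lemma lemB n m prec (H : 'M['F_2]_(n,m)) s t v :
  star (Rstep prec H) s t -> t.1.1 = [::] -> v \in t.1.2 ->
  v \in s.1.2 \/ forall i, (exists2 g, g \in t.2 & dividesw g.1 (mulw v (varw i)))
                          \/ mulw v (varw i) \in t.1.2.
Proof.
elim=> [st|a y c st yt IH] Lt vt; first by left.
case: (IH Lt vt) => [vy|]; last by right.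
case: (stepB st vy) => [|h]; first by left.
by right=> i; apply: lemA yt Lt (h i).
Qed.

Lemma irr_std n (G : seq (word n * word n)) w : irreducible G w -> standard w.
Proof. move=> h; apply/negPn/negP=> hs; exact: (h _ (red_std G hs)). Qed.

Lemma irr_nodiv n (G : seq (word n * word n)) w g :
  irreducible G w -> g \in G -> dividesw g.1 w -> False.
Proof.
move=> h; case: g => u u' gG [s e]; apply: (h (mulw u' s)).
exact: red_bin (irr_std h) gG e.
Qed.

Lemma irr_div n (G : seq (word n * word n)) (v x : word n) :
  irreducible G (mulw v x) -> irreducible G v.
Proof.
move=> hw v' r; have st := irr_std hw; move: hw st.
case: v v' / r => [u hs|u a b s hs g ->] hw st.
- move: hs; apply/negP/negPn/forallP=> i; move/forallP: st => /(_ i).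
  rewrite ffunE; lia.
- apply: (hw (mulw b (mulw s x))); apply: (red_bin st g); by rewrite mulwA.
Qed.

Lemma red_std_next n (G : seq (word n * word n)) w w' :
  redG G w w' -> ~~ standard w -> standard w'.
Proof.
case=> [u hs _ | u a b s hs _ _ hn]; last by rewrite hs in hn.
apply/forallP=> i; rewrite ffunE; exact: ltn_pmod.
Qed.

Theorem theorem3p5 (n k : nat) (H : 'M['F_2]_(n, n - k))
  (prec : rel (word n)) (N : seq (word n)) (G : seq (word n * word n)) :
  (k <= n)%N -> \rank H = (n - k)%N ->
  admissible prec -> outputR prec H N G ->
  [/\ ~ (exists f : nat -> word n, forall i, redG G (f i) (f i.+1)),
      (forall w w1 w2, star (redG G) w w1 -> star (redG G) w w2 ->
         irreducible G w1 -> irreducible G w2 -> w1 = w2),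
      (forall w, irreducible G w -> w \in N)
    & (forall w w', star (redG G) w w' -> syn H w = syn H w')].
Proof.
move=> _ _ adm hR.
have [I1 I2 I3 I4] : inv prec H ([::], N, G).
  by apply: inv_star adm hR _; split.
rewrite /= in I1 I2 I3 I4.
have synred : forall w w', redG G w w' -> syn H w = syn H w'.
  move=> w w' [u _|u a b s _ g ->]; first by rewrite syn_std.
  by rewrite !syn_mul (I1 _ g).
have ltred : forall w w', redG G w w' -> lt_e prec w' w.
  move=> w w' [u hs|u a b s hs g e]; first exact: lt_e_std.
  rewrite e; apply: lt_e_bin adm _ (I3 _ g); by rewrite -e.
have synstar : forall w w', star (redG G) w w' -> syn H w = syn H w'.
  by move=> w w'; elim=> // a b c r _ <-; exact: synred.
have irrN : forall w, irreducible G w -> w \in N.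
  suff: forall c w, #|Ind w| < c -> irreducible G w -> w \in N.
    by move=> h w; apply: (h #|Ind w|.+1).
  elim=> // c IHc w hc hw.
  case: (eqVneq w onew) => [eo|hw1].
    subst w.
    have := lemA (x := onew) hR erefl; rewrite /= mem_head => /(_ isT).
    by case=> [[g gG gd]|] //; case: (irr_nodiv hw gG gd).
  have [i hi] : exists i, (0 < w i)%N.
    apply/existsP; apply: contraR hw1 => /existsPn h.
    apply/eqP/ffunP=> i; rewrite ffunE; move: (h i); rewrite lt0n negbK => /eqP //.
  have wst := irr_std hw.
  pose v : word n := [ffun j => if j == i then 0%N else w j].
  have E : w = mulw v (varw i).
    apply/ffunP=> j; rewrite !ffunE; case: (eqVneq j i) => [->|_]; last by rewrite addn0.
    move/forallP: wst => /(_ i) h /=; lia.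
  have vN : v \in N.
    apply: IHc; last by apply: (@irr_div _ _ v (varw i)); rewrite -E.
    suff: #|Ind v| < #|Ind w| by move: hc; lia.
    apply: proper_card; apply/properP; split.
      by apply/subsetP=> j; rewrite !inE ffunE; case: ifP.
    by exists i; rewrite !inE ?ffunE ?eqxx.
  case: (lemB hR erefl vN) => [//|/(_ i)].
  case=> [[g gG gd]|]; last by rewrite -E.
  by case: (irr_nodiv hw gG); rewrite E.
split.
- case=> f hf.
  have dec : forall i j, (i < j)%N -> lt_e prec (f j) (f i).
    move=> i j; elim: j => // j IHj; rewrite ltnS leq_eqVlt => /orP[/eqP->|hij].
      exact: ltred (hf j).
    exact: lt_e_trans adm (ltred _ _ (hf j)) (IHj hij).
  pose p q := if standard (f (2 * q)%N) then (2 * q)%N else (2 * q).+1.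
  pose g q := f (p q).
  have std_g : forall q, standard (g q).
    move=> q; rewrite /g /p; case: ifP => // /negbT h.
    exact: red_std_next (hf _) h.
  have p_lt : forall q l, (q < l)%N -> (p q < p l)%N.
    move=> q l h; rewrite /p; do 2 case: ifP => _; lia.
  pose enc (w : word n) : {ffun 'I_n -> bool} := [ffun i => w i == 1%N].
  pose F (k : 'I_(#|{ffun 'I_n -> bool}|.+1)) := enc (g k).
  have Finj : injective F.
    move=> q l /ffunP E.
    have ekl : g q = g l.
      apply/ffunP=> i; have := E i; rewrite !ffunE.
      move/forallP: (std_g q) => /(_ i); move/forallP: (std_g l) => /(_ i).
      by case: (g q i) => [|[|x]]; case: (g l i) => [|[|y]].
    case: (ltngtP q l) => [h|h|/val_inj //].
      by have := dec _ _ (p_lt _ _ h); rewrite -/(g l) -/(g q) ekl (negbTE (lt_e_irr _ adm)).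
    by have := dec _ _ (p_lt _ _ h); rewrite -/(g l) -/(g q) ekl (negbTE (lt_e_irr _ adm)).
  by have := leq_card F Finj; rewrite card_ord ltnn.
- move=> w w1 w2 h1 h2 i1 i2; apply: I2; [exact: irrN|exact: irrN|].
  by rewrite -(synstar _ _ h1) -(synstar _ _ h2).
- exact: irrN.
- exact: synstar.
Qed.
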